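(* Let $\widehat M \in \mathbb{R}^{d\times d}$ be symmetric. Fix a unit vector $w\in\mathbb{R}^d$, a scalar $a \in\mathbb{R}$ and $\alpha>0$, and define $\tilde w := (I + \alpha a\widehat M)w$, $w^+ := \tilde w/\|\tilde w\|_2$, $q := w^\top\widehat M w$ and $q^+ := (w^+)^\top\widehat M w^+$. If $\alpha |a|\,\|\widehat M\|_2 \le 1/2$, then $q^+ - q$ is either zero or has the same sign as $a$.
   Context: In the paper $\widehat M = \frac1N\sum_s y^{(s)}x^{(s)}x^{(s)\top}$ is the empirical moment matrix; $\|\cdot\|_2$ denotes the operator norm. *)

(* Defs.v *)
From HB Require Import structures.
From mathcomp Require Import all_boot all_order all_algebra.
From mathcomp Require Import classical_sets reals.
Set Implicit Arguments. Unset Strict Implicit. Unset Printing Implicit Defensive.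
Import Order.TTheory GRing.Theory Num.Theory.
Local Open Scope ring_scope.
Local Open Scope classical_set_scope.

Definition norm2 (R : realType) (d : nat) (v : 'cV[R]_d) : R :=
  Num.sqrt (\sum_(i < d) v i 0 ^+ 2).

Definition opnorm (R : realType) (d : nat) (A : 'M[R]_d) : R :=
  sup [set norm2 (A *m v) | v in [set v : 'cV[R]_d | norm2 v = 1]].

Definition quadf (R : realType) (d : nat) (M : 'M[R]_d) (w : 'cV[R]_d) : R :=
  (w^T *m M *m w) 0 0.

(* Main.v *)
Require Import Defs.
From HB Require Import structures.
From mathcomp Require Import all_boot all_order all_algebra.
From mathcomp Require Import classical_sets reals.
From mathcomp Require Import ring lra.
Import Order.TTheory GRing.Theory Num.Theory.
Set Implicit Arguments. Unset Strict Implicit. Unset Printing Implicit Defensive.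
Local Open Scope ring_scope.

Definition dt (R : realType) (d : nat) (x y : 'cV[R]_d) : R := (x^T *m y) 0 0.

Lemma dtE (R : realType) (d : nat) (x y : 'cV[R]_d) :
  dt x y = \sum_(i < d) x i 0 * y i 0.
Proof. by rewrite /dt mxE; apply: eq_bigr => i _; rewrite mxE. Qed.

Lemma dtC (R : realType) (d : nat) (x y : 'cV[R]_d) : dt x y = dt y x.
Proof. by rewrite !dtE; apply: eq_bigr => i _; rewrite mulrC. Qed.

Lemma dtDl (R : realType) (d : nat) (x y z : 'cV[R]_d) : dt (x + y) z = dt x z + dt y z.
Proof. by rewrite !dtE -big_split; apply: eq_bigr => i _; rewrite mxE mulrDl. Qed.

Lemma dtZl (R : realType) (d : nat) c (x z : 'cV[R]_d) : dt (c *: x) z = c * dt x z.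
Proof. by rewrite !dtE mulr_sumr; apply: eq_bigr => i _; rewrite mxE mulrA. Qed.

Lemma dtDr (R : realType) (d : nat) (x y z : 'cV[R]_d) : dt z (x + y) = dt z x + dt z y.
Proof. by rewrite dtC dtDl !(dtC z). Qed.

Lemma dtZr (R : realType) (d : nat) c (x z : 'cV[R]_d) : dt z (c *: x) = c * dt z x.
Proof. by rewrite dtC dtZl (dtC z). Qed.

Lemma dtNl (R : realType) (d : nat) (x z : 'cV[R]_d) : dt (- x) z = - dt x z.
Proof. by rewrite -scaleN1r dtZl mulN1r. Qed.
Lemma dtNr (R : realType) (d : nat) (x z : 'cV[R]_d) : dt z (- x) = - dt z x.
Proof. by rewrite -scaleN1r dtZr mulN1r. Qed.

Lemma dtM (R : realType) (d : nat) (M : 'M[R]_d) (x y : 'cV[R]_d) :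
  M^T = M -> dt (M *m x) y = dt x (M *m y).
Proof. by move=> hM; rewrite /dt trmx_mul hM mulmxA. Qed.

Lemma dt_ge0 (R : realType) (d : nat) (x : 'cV[R]_d) : 0 <= dt x x.
Proof. by rewrite dtE sumr_ge0 // => i _; rewrite -expr2 sqr_ge0. Qed.

Lemma norm2E (R : realType) (d : nat) (x : 'cV[R]_d) : norm2 x = Num.sqrt (dt x x).
Proof. by rewrite /norm2 dtE; congr Num.sqrt; apply: eq_bigr => i _; rewrite expr2. Qed.

Lemma dt_eq0 (R : realType) (d : nat) (x : 'cV[R]_d) : dt x x = 0 -> x = 0.
Proof.
rewrite dtE => h; apply/matrixP => i j; rewrite ord1 mxE.
have hp : forall k : 'I_d, true -> 0 <= x k 0 * x k 0 by move=> k _; rewrite -expr2 sqr_ge0.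
have := psumr_eq0P hp h (i:=i) isT.
by rewrite -expr2 => /eqP; rewrite sqrf_eq0 => /eqP ->.
Qed.

Lemma quadfE (R : realType) (d : nat) (M : 'M[R]_d) (w : 'cV[R]_d) :
  quadf M w = dt w (M *m w).
Proof. by rewrite /quadf /dt mulmxA. Qed.

Local Open Scope classical_set_scope.

Lemma unit_dt (R : realType) (d : nat) (v : 'cV[R]_d) : norm2 v = 1 -> dt v v = 1.
Proof.
rewrite norm2E => h; rewrite -(sqr_sqrtr (dt_ge0 v)) h; exact: expr1n.
Qed.

Lemma coord_le1 (R : realType) (d : nat) (v : 'cV[R]_d) j : dt v v = 1 -> `|v j 0| <= 1.
Proof.
rewrite dtE (bigD1 j isT) /= => h.
have h2 : v j 0 * v j 0 <= 1.
  by rewrite -h lerDl sumr_ge0 // => i _; rewrite -expr2 sqr_ge0.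
by by rewrite ler_norml; apply/andP; split; nra.
Qed.

Lemma opnorm_sup (R : realType) (d : nat) (M : 'M[R]_d) (w : 'cV[R]_d) :
  norm2 w = 1 ->
  has_sup [set norm2 (M *m v) | v in [set v : 'cV[R]_d | norm2 v = 1]].
Proof.
move=> hw; split; first by exists (norm2 (M *m w)), w.
pose C := \sum_(i < d) (\sum_(j < d) `|M i j|) ^+ 2.
exists (Num.sqrt C) => _ [v /= hv <-].
rewrite norm2E -[dt _ _]sqr_sqrtr ?dt_ge0 //.
rewrite sqrtr_sqr ger0_norm ?sqrtr_ge0 // ler_sqrt; last first.
  by rewrite sumr_ge0 // => i _; rewrite sqr_ge0.
have hv1 := unit_dt hv.
rewrite dtE; apply: ler_sum => i _; rewrite -expr2.
rewrite -real_normK ?num_real //; rewrite ler_pXn2r ?nnegrE ?normr_ge0 ?sumr_ge0 //.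
rewrite mxE; apply: (le_trans (ler_norm_sum _ _ _)).
apply: ler_sum => j _; rewrite normrM -[X in _ <= X]mulr1 ler_wpM2l //.
exact: coord_le1.
Qed.

Lemma sqrt_le_sq (R : realType) (x K : R) : 0 <= x -> Num.sqrt x <= K -> x <= K ^+ 2.
Proof.
move=> hx h; have h0 := sqrtr_ge0 x.
rewrite -(sqr_sqrtr hx); nra.
Qed.

Lemma opA (R : realType) (d : nat) (M : 'M[R]_d) (w v : 'cV[R]_d) :
  norm2 w = 1 -> 0 <= opnorm M /\ dt (M *m v) (M *m v) <= opnorm M ^+ 2 * dt v v.
Proof.
move=> hw; have hs := opnorm_sup M hw.
have ub : forall u, norm2 u = 1 -> norm2 (M *m u) <= opnorm M.
  by move=> u hu; apply: (sup_upper_bound hs); exists u.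
have K0 : 0 <= opnorm M.
  by apply: le_trans (ub w hw); rewrite norm2E sqrtr_ge0.
split => //.
have [c0|cn0] := eqVneq (dt v v) 0.
  by rewrite c0 (dt_eq0 c0) mulmx0 /dt trmx0 mul0mx !mxE mulr0.
have cpos : 0 < dt v v by rewrite lt_def cn0 dt_ge0.
set r := Num.sqrt (dt v v).
have rpos : 0 < r by rewrite sqrtr_gt0.
have r2 : r ^+ 2 = dt v v by rewrite sqr_sqrtr // ltW.
have sr : r^-1 * r = 1 by rewrite mulVf // gt_eqF.
have hu : norm2 (r^-1 *: v) = 1.
  rewrite norm2E dtZl dtZr.
  have -> : r^-1 * (r^-1 * dt v v) = 1 by rewrite -r2; field; rewrite gt_eqF.
  exact: sqrtr1.
have := ub _ hu; rewrite norm2E -scalemxAr dtZl dtZr => h.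
have := sqrt_le_sq _ h; rewrite -r2.
have := dt_ge0 (M *m v).
set X := dt _ _; set K := opnorm M; set s := r^-1 => X0 hX.
have -> : X = r ^+ 2 * (s * (s * X)).
  by rewrite /s; field; rewrite gt_eqF.
rewrite [K ^+ 2 * _]mulrC; apply: ler_wpM2l; first by rewrite sqr_ge0.
apply: hX; rewrite /s; have si : 0 <= r^-1 by rewrite invr_ge0 ltW.
by rewrite !mulr_ge0.
Qed.

Lemma opB (R : realType) (d : nat) (M : 'M[R]_d) (w v : 'cV[R]_d) :
  norm2 w = 1 -> `|dt v (M *m v)| <= opnorm M * dt v v.
Proof.
move=> hw; have [K0 hA] := opA M v hw.
have c0 := dt_ge0 v.
have [Ke|Kn] := eqVneq (opnorm M) 0.
  move: hA; rewrite Ke expr2 !mul0r => hA.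
  have : dt (M *m v) (M *m v) = 0 by apply/eqP; rewrite eq_le hA dt_ge0.
  by move/dt_eq0 => ->; rewrite /dt mulmx0 mxE normr0.
have Kp : 0 < opnorm M by rewrite lt_def Kn K0.
have e1 := dt_ge0 (opnorm M *: v - M *m v).
have e2 := dt_ge0 (opnorm M *: v + M *m v).
rewrite !(dtDl, dtDr, dtNl, dtNr, dtZl, dtZr) (dtC (M *m v) v) in e1 e2.
move: hA e1 e2; set K := opnorm M; set x := dt v (M *m v); set c := dt v v;
  set y := dt (M *m v) (M *m v) => hA e1 e2.
have h1 : K * x <= K * (K * c) by rewrite expr2 in hA; nra.
have h2 : K * (- x) <= K * (K * c) by rewrite expr2 in hA; nra.
rewrite ler_pM2l // in h1; rewrite ler_pM2l // in h2.
by rewrite ler_norml; apply/andP; split; lra.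
Qed.
Local Close Scope classical_set_scope.

Theorem lemma6 (R : realType) (d : nat) (M : 'M[R]_d) (w : 'cV[R]_d)
    (a alpha : R) :
  M^T = M ->
  norm2 w = 1 ->
  0 < alpha ->
  alpha * `|a| * opnorm M <= 1 / 2 ->
  let wt := (1%:M + (alpha * a) *: M) *m w in
  let wp := (norm2 wt)^-1 *: wt in
  let q := quadf M w in
  let qp := quadf M wp in
  qp - q = 0 \/ Num.sg (qp - q) = Num.sg a.
Proof.
move=> hM hw ha hK wt wp q qp.
have dM : forall x y, dt (M *m x) y = dt x (M *m y) by move=> x y; exact: dtM.
have w1 := unit_dt hw.
have [K0 _] := opA M w hw.
set t := alpha * a.
have ewt : wt = w + t *: (M *m w) by rewrite /wt mulmxDl mul1mx -scalemxAl.
set u := M *m w - q *: w.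
have eMu : M *m u = M *m (M *m w) - q *: (M *m w) by rewrite mulmxBr scalemxAr.
have hu := opB M u hw.
have hq := opB M w hw.
rewrite -quadfE -/q w1 mulr1 in hq.
have hN : dt wt wt = 1 + 2 * t * q + t ^+ 2 * dt w (M *m (M *m w)).
  rewrite ewt !(dtDl, dtDr, dtZl, dtZr) !dM w1 -quadfE -/q.
  ring.
have hD : dt wt (M *m wt) = q + 2 * t * dt w (M *m (M *m w))
    + t ^+ 2 * dt w (M *m (M *m (M *m w))).
  rewrite ewt mulmxDr -scalemxAr !(dtDl, dtDr, dtZl, dtZr) !dM -quadfE -/q.
  ring.
have huu : dt u u = dt w (M *m (M *m w)) - q ^+ 2.
  rewrite /u !(dtDl, dtDr, dtZl, dtZr, dtNl, dtNr) !dM w1 -quadfE -/q.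
  ring.
have huM : dt u (M *m u) = dt w (M *m (M *m (M *m w))) - 2 * q * dt w (M *m (M *m w)) + q ^+ 3.
  rewrite eMu /u !(dtDl, dtDr, dtZl, dtZr, dtNl, dtNr) !dM -quadfE -/q.
  ring.
have ss : (norm2 wt)^-1 * (norm2 wt)^-1 = (dt wt wt)^-1.
  by rewrite -invfM -expr2 norm2E sqr_sqrtr ?dt_ge0.
have eqp : qp = (dt wt wt)^-1 * dt wt (M *m wt).
  by rewrite /qp quadfE /wp -scalemxAr dtZl dtZr mulrA ss.
rewrite eqp hN hD.
move: hN hD huu huM hu hq hK.
set p2 := dt w (M *m (M *m w)); set p3 := dt w (M *m (M *m (M *m w))).
set uu := dt u u; set uM := dt u (M *m u); set K := opnorm M.
move=> hN hD huu huM hu hq hK.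
have uu0 : 0 <= uu by exact: dt_ge0.
have tK : `|t| * K <= 1/2 by rewrite normrM gtr0_norm.
have e1 : `|t * uM| <= 1/2 * uu.
  rewrite normrM; apply: (le_trans (ler_wpM2l (normr_ge0 t) hu)).
  by rewrite mulrA ler_wpM2r.
have e2 : `|t * q| <= 1/2.
  rewrite normrM; apply: (le_trans (ler_wpM2l (normr_ge0 t) hq)); lra.
move: e1 e2; rewrite !ler_norml => /andP[e1a e1b] /andP[e2a e2b].
set Bk := 2 * uu + t * uM + (t * q) * uu.
have Bk0 : uu <= Bk by rewrite /Bk; nra.
have Nn : 1/4 <= 1 + 2 * t * q + t ^+ 2 * p2.
  have -> : 1 + 2 * t * q + t ^+ 2 * p2 = (1 + t * q) ^+ 2 + t ^+ 2 * uu by rewrite huu; ring.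
  have : 0 <= t ^+ 2 * uu by rewrite mulr_ge0 ?sqr_ge0.
  nra.
have Nn0 : 1 + 2 * t * q + t ^+ 2 * p2 != 0 by apply/eqP => h; move: Nn; rewrite h; apply/negP; rewrite -ltNge divr_gt0.
have -> : (1 + 2 * t * q + t ^+ 2 * p2)^-1 * (q + 2 * t * p2 + t ^+ 2 * p3) - q
    = t * (Bk / (1 + 2 * t * q + t ^+ 2 * p2)).
  rewrite /Bk huu huM; field; exact: Nn0.
have [Be|Bn] := eqVneq Bk 0; first by left; rewrite Be mul0r mulr0.
right.
have cpos : 0 < Bk / (1 + 2 * t * q + t ^+ 2 * p2).
  rewrite divr_gt0 //; last by apply: lt_le_trans Nn; rewrite divr_gt0.
  by rewrite lt_def Bn (le_trans uu0 Bk0).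
by rewrite sgrM (gtr0_sg cpos) mulr1 /t sgrM (gtr0_sg ha) mul1r.
Qed.
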